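(* For each $i\in\{1,2,3\}$, $P_i'=2P_i''-M$, i.e. $P_i''$ is the midpoint of $MP_i'$. Hence $T'=P_1'P_2'P_3'$ is the image of $T''=P_1''P_2''P_3''$ under the homothety with center $M$ and ratio $2$, and the area of $T''$ equals $\frac{27\sqrt3}{64}\frac{c^4}{ab}$ (one quarter of the area of $T'$), independent of $u$.
   Context: Let $a>b>0$ and $c>0$ with $c^2=a^2-b^2$. Let $\mathcal{E}$ be the ellipse $x^2/a^2+y^2/b^2=1$, parametrized by $P(t)=(a\cos t,b\sin t)$. Fix $u\in\mathbb{R}$, let $M=(a\cos u,b\sin u)$ and $\Delta_u(t)=(x_u(t),y_u(t))$, where $x_u(t)=\frac1a\big(c^2(1+\cos(t+u))\cos t-a^2\cos u\big)$ and $y_u(t)=\frac1b\big(c^2\cos t\sin(t+u)-c^2\sin t-a^2\sin u\big)$ (the negative pedal curve of $\mathcal{E}$ with respect to $M$). For $i=1,2,3$ let $t_i=-u/3-2\pi(i-1)/3$, $P_i'=\Delta_u(t_i)$ (the cusps), and $P_i''=\left(\frac{c^2\cos^3 t_i}{a},-\frac{c^2\sin^3 t_i}{b}\right)$ (the center of curvature of $\mathcal{E}$ at $P(t_i)$). *)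

(* Defs.v *)
From Stdlib Require Import Reals.
Open Scope R_scope.

(* Negative pedal curve Delta_u(t) = (x_u(t), y_u(t)) of the ellipse
   x^2/a^2 + y^2/b^2 = 1 w.r.t. M = (a cos u, b sin u), c^2 = a^2 - b^2. *)
Definition xu (a b c u t : R) : R :=
  / a * (c ^ 2 * (1 + cos (t + u)) * cos t - a ^ 2 * cos u).
Definition yu (a b c u t : R) : R :=
  / b * (c ^ 2 * cos t * sin (t + u) - c ^ 2 * sin t - a ^ 2 * sin u).

Definition tcusp (u : R) (i : nat) : R :=
  - u / 3 - 2 * PI * (INR i - 1) / 3.

Definition Mpt (a b u : R) : R * R := (a * cos u, b * sin u).

Definition Pcusp (a b c u : R) (i : nat) : R * R :=
  (xu a b c u (tcusp u i), yu a b c u (tcusp u i)).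

(* center of curvature P_i'' of the ellipse at P(t_i) *)
Definition Pcurv (a b c u : R) (i : nat) : R * R :=
  (c ^ 2 * cos (tcusp u i) ^ 3 / a, - (c ^ 2 * sin (tcusp u i) ^ 3) / b).

Definition homothety (O : R * R) (k : R) (P : R * R) : R * R :=
  (fst O + k * (fst P - fst O), snd O + k * (snd P - snd O)).

Definition tri_area (P1 P2 P3 : R * R) : R :=
  Rabs ((fst P2 - fst P1) * (snd P3 - snd P1)
        - (fst P3 - fst P1) * (snd P2 - snd P1)) / 2.

(* Main.v *)
Require Import Defs.
From Stdlib Require Import Reals Lra Lia Psatz.
Open Scope R_scope.

Lemma cos3 x : cos (3 * x) = 4 * cos x ^ 3 - 3 * cos x.
Proof.
  replace (3 * x) with (2 * x + x) by ring.
  rewrite cos_plus, cos_2a, sin_2a.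
  pose proof (sin2_cos2 x). unfold Rsqr in H.
  replace (sin x * sin x) with (1 - cos x * cos x) by lra.
  replace (2 * sin x * cos x * sin x) with (2 * cos x * (sin x * sin x)) by ring.
  replace (sin x * sin x) with (1 - cos x * cos x) by lra. ring.
Qed.

Lemma sin3 x : sin (3 * x) = 3 * sin x - 4 * sin x ^ 3.
Proof.
  replace (3 * x) with (2 * x + x) by ring.
  rewrite sin_plus, cos_2a, sin_2a.
  pose proof (sin2_cos2 x). unfold Rsqr in H.
  replace (2 * sin x * cos x * cos x) with (2 * sin x * (cos x * cos x)) by ring.
  replace (cos x * cos x) with (1 - sin x * sin x) by lra. ring.
Qed.

Lemma key u i : (1 <= i)%nat ->
  cos u = cos (3 * tcusp u i) /\ sin u = - sin (3 * tcusp u i).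
Proof.
  intros Hi. unfold tcusp.
  replace (3 * (- u / 3 - 2 * PI * (INR i - 1) / 3))
    with (- (u + 2 * INR (i - 1) * PI)).
  2:{ rewrite minus_INR by exact Hi. simpl. field. }
  rewrite cos_neg, sin_neg, cos_period, sin_period. split; ring.
Qed.

Lemma part1 a b c u i : a > b -> b > 0 -> c ^ 2 = a ^ 2 - b ^ 2 -> (1 <= i)%nat ->
  Pcusp a b c u i =
       (2 * fst (Pcurv a b c u i) - fst (Mpt a b u),
        2 * snd (Pcurv a b c u i) - snd (Mpt a b u)).
Proof.
  intros Hab Hb Hc Hi. destruct (key u i Hi) as [Hcu Hsu].
  unfold Pcusp, Pcurv, Mpt, xu, yu. simpl fst; simpl snd.
  set (t := tcusp u i) in *.
  rewrite cos3 in Hcu. rewrite sin3 in Hsu.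
  pose proof (sin2_cos2 t) as H1. unfold Rsqr in H1.
  rewrite cos_plus, sin_plus, Hcu, Hsu.
  set (C := cos t) in *. set (S := sin t) in *.
  f_equal.
  - field_simplify; try lra. f_equal. rewrite Hc.
    replace (S^4) with ((1 - C*C)^2) by (rewrite <- H1; ring).
    replace (S^2) with (1 - C*C) by (rewrite <- H1; ring).
    ring.
  - field_simplify; try lra. f_equal. rewrite Hc.
    replace (C^2) with (1 - S*S) by (rewrite <- H1; ring).
    replace (C^4) with ((1 - S*S)^2) by (rewrite <- H1; ring).
    replace (C^3) with (C * (1 - S*S)) by (rewrite <- H1; ring).
    ring.
Qed.

Lemma Pcurv_eq a b c u i : a > 0 -> b > 0 -> (1 <= i)%nat ->
  Pcurv a b c u i = (c^2 * (3 * cos (tcusp u i) + cos u) / (4 * a),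
                     - (c^2 * (3 * sin (tcusp u i) + sin u)) / (4 * b)).
Proof.
  intros Ha Hb Hi. destruct (key u i Hi) as [Hcu Hsu].
  rewrite cos3 in Hcu. rewrite sin3 in Hsu.
  unfold Pcurv. rewrite Hcu, Hsu. f_equal; field; lra.
Qed.

Lemma c23 : cos (2 * PI / 3) = - / 2 /\ sin (2 * PI / 3) = sqrt 3 / 2.
Proof.
  replace (2 * PI / 3) with (PI - PI / 3) by field.
  rewrite Rtrigo_facts.cos_pi_minus, sin_PI_x, cos_PI3, sin_PI3. split; field.
Qed.

Lemma c43 : cos (4 * PI / 3) = - / 2 /\ sin (4 * PI / 3) = - (sqrt 3 / 2).
Proof.
  replace (4 * PI / 3) with (PI / 3 + PI) by field.
  rewrite neg_cos, neg_sin, cos_PI3, sin_PI3. split; field.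
Qed.

Lemma tri_hom O P1 P2 P3 :
  tri_area (homothety O 2 P1) (homothety O 2 P2) (homothety O 2 P3)
  = 4 * tri_area P1 P2 P3.
Proof.
  unfold tri_area, homothety; simpl.
  match goal with |- Rabs ?X / 2 = 4 * (Rabs ?Y / 2) =>
    replace X with (4 * Y) by ring end.
  rewrite Rabs_mult, (Rabs_pos_eq 4) by lra. field.
Qed.

Lemma area a b c u : a > 0 -> b > 0 ->
  tri_area (Pcurv a b c u 1) (Pcurv a b c u 2) (Pcurv a b c u 3)
       = 27 * sqrt 3 / 64 * (c ^ 4 / (a * b)).
Proof.
  intros Ha Hb.
  rewrite !Pcurv_eq by (auto; lia).
  assert (E2 : tcusp u 2 = tcusp u 1 - 2 * PI / 3) by (unfold tcusp; simpl; field).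
  assert (E3 : tcusp u 3 = tcusp u 1 - 4 * PI / 3) by (unfold tcusp; simpl; field).
  rewrite E2, E3, !cos_minus, !sin_minus.
  destruct c23 as [-> ->]. destruct c43 as [-> ->].
  set (C := cos (tcusp u 1)). set (S := sin (tcusp u 1)).
  pose proof (sin2_cos2 (tcusp u 1)) as H1. unfold Rsqr in H1. fold C S in H1.
  pose proof (sqrt_sqrt 3 ltac:(lra)) as Hr.
  set (r := sqrt 3) in *.
  unfold tri_area; simpl.
  match goal with |- Rabs ?X / 2 = _ =>
    replace X with (27 * r / 32 * (c ^ 4 / (a * b))) end.
  - rewrite Rabs_pos_eq. field. lra.
    assert (0 < r) by (apply sqrt_lt_R0; lra).
    assert (0 <= c^4) by (replace (c^4) with ((c^2)^2) by ring; apply pow2_ge_0).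
    apply Rmult_le_pos. lra. unfold Rdiv. apply Rmult_le_pos. lra.
    left. apply Rinv_0_lt_compat. nra.
  - field_simplify; try lra. replace (S^2) with (1 - C^2) by nra. field. lra.
Qed.

Theorem proposition7p1 (a b c u : R) :
  a > b -> b > 0 -> c > 0 -> c ^ 2 = a ^ 2 - b ^ 2 ->
  (forall i : nat, (1 <= i <= 3)%nat ->
     Pcusp a b c u i =
       (2 * fst (Pcurv a b c u i) - fst (Mpt a b u),
        2 * snd (Pcurv a b c u i) - snd (Mpt a b u))
     /\ Pcusp a b c u i = homothety (Mpt a b u) 2 (Pcurv a b c u i))
  /\ tri_area (Pcurv a b c u 1) (Pcurv a b c u 2) (Pcurv a b c u 3)
       = 27 * sqrt 3 / 64 * (c ^ 4 / (a * b))
  /\ tri_area (Pcurv a b c u 1) (Pcurv a b c u 2) (Pcurv a b c u 3)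
       = / 4 * tri_area (Pcusp a b c u 1) (Pcusp a b c u 2) (Pcusp a b c u 3).
Proof.
  intros Hab Hb Hc Hc2.
  assert (Hh : forall i, (1 <= i)%nat ->
    Pcusp a b c u i = homothety (Mpt a b u) 2 (Pcurv a b c u i)).
  { intros i Hi. rewrite (part1 a b c u i Hab Hb Hc2 Hi). unfold homothety.
    f_equal; ring. }
  split; [|split].
  - intros i [Hi _]. split. apply part1; auto. apply Hh; auto.
  - apply area; lra.
  - rewrite !Hh by lia. rewrite tri_hom. field.
Qed.
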